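(* Let $G=(V,E)$ be a connected $(n,d,\lambda)$ graph. Let $v_1,\dots,v_{t-1}$ ($t\ge2$) be vertices of $G$, let $B=\bigcup_{i=1}^{t-1}N[v_i]$ and $W=V\setminus B$, and suppose $|W|>\frac{\lambda}{d+\lambda}n$. Then there exists a vertex $u\in B$ such that \[ 1\le |N(u)\cap W|\le (d+\lambda)\frac{|W|}{n}+\lambda . \]
   Context: An $(n,d,\lambda)$ graph is an $n$-vertex $d$-regular graph whose adjacency matrix eigenvalues $\lambda_1\ge\dots\ge\lambda_n$ satisfy $|\lambda_i|\le\lambda$ for all $2\le i\le n$, where $\lambda\ge 0$. $N(v)$ is the set of neighbours of $v$ and $N[v]=N(v)\cup\{v\}$. (In the paper, $|N(u)\cap W|$ is called the type of $u$, and the sets arise as the black/white sets during a greedy construction of a Z-sequence.) *)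

(* Defs.v *)
From HB Require Import structures.
From mathcomp Require Import all_boot all_order all_algebra.
Set Implicit Arguments. Unset Strict Implicit. Unset Printing Implicit Defensive.
Import Order.TTheory GRing.Theory Num.Theory.
Local Open Scope ring_scope.

Definition simple_graph (T : finType) (e : rel T) : Prop :=
  symmetric e /\ irreflexive e.

Definition nbhd (T : finType) (e : rel T) (v : T) : {set T} := [set u | e v u].
Definition cnbhd (T : finType) (e : rel T) (v : T) : {set T} := v |: nbhd e v.

Definition regular (T : finType) (e : rel T) (d : nat) : Prop :=
  forall v : T, #|nbhd e v| = d.

Definition connected_graph (T : finType) (e : rel T) : Prop :=
  forall x y : T, connect e x y.

Definition adjmx (R : nzRingType) (T : finType) (e : rel T) : 'M[R]_#|T| :=
  \matrix_(i, j) (e (enum_val i) (enum_val j))%:R.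

(* (n,d,lambda) graph: d-regular, and the eigenvalues (roots of the
   characteristic polynomial of the adjacency matrix, with multiplicity)
   listed in non-increasing order l_1 >= ... >= l_n satisfy |l_i| <= lambda
   for 2 <= i <= n. *)
Definition ndl_graph (R : rcfType) (T : finType) (e : rel T) (d : nat) (lam : R)
  : Prop :=
  [/\ simple_graph e, regular e d, 0 <= lam &
    exists l : 'I_#|T| -> R,
      [/\ char_poly (adjmx R e) = \prod_(i < #|T|) ('X - (l i)%:P),
          (forall i j : 'I_#|T|, (i <= j)%N -> l j <= l i) &
          forall i : 'I_#|T|, (1 <= i)%N -> `|l i| <= lam]].

(* Main.v *)
Require Import Defs.
From HB Require Import structures.
From mathcomp Require Import all_boot all_order all_algebra.
From mathcomp Require Import spectral sesquilinear complex.
Set Implicit Arguments. Unset Strict Implicit. Unset Printing Implicit Defensive.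
Import Order.TTheory GRing.Theory Num.Theory Num.Def.
Local Open Scope ring_scope.

Lemma sum_ind (R : nzRingType) (T : finType) (P : pred T) :
  \sum_(j < #|T|) ((P (enum_val j))%:R : R) = #|P|%:R.
Proof.
rewrite -(big_enum_val (fun x : T => ((P x)%:R : R))) /=.
rewrite (eq_bigr (fun x => if P x then 1 else 0)); last by move=> x _; case: (P x).
rewrite -big_mkcondr sumr_const; congr (_ *+ _); apply: eq_card => x.
Qed.

Lemma char_poly_similar (F : fieldType) n (P M : 'M[F]_n) :
  P \in unitmx -> char_poly (invmx P *m M *m P) = char_poly M.
Proof.
move=> Pu; rewrite /char_poly /char_poly_mx.
set Q := map_mx polyC P; set Qi := map_mx polyC (invmx P).
have QiQ : Qi *m Q = 1%:M by rewrite -map_mxM mulVmx // map_mx1.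
have -> : 'X%:M - map_mx polyC (invmx P *m M *m P) =
          Qi *m ('X%:M - map_mx polyC M) *m Q.
  rewrite mulmxBr mulmxBl !map_mxM -!mulmxA; congr (_ - _).
  by rewrite mul_scalar_mx -scalemxAr QiQ scalemx1.
by rewrite !det_mulmx mulrAC -det_mulmx QiQ det1 mul1r.
Qed.

Lemma char_poly_diag (F : comNzRingType) n (D : 'rV[F]_n) :
  char_poly (diag_mx D) = \prod_(i < n) ('X - (D 0 i)%:P).
Proof.
rewrite char_poly_trig ?diag_mx_is_trig //.
by apply: eq_bigr => i _; rewrite mxE eqxx mulr1n.
Qed.
Section S1.
Variable C : numClosedFieldType.
Local Notation "M ^t*" := (map_mx conjC (trmx M)) (at level 30).

Lemma sqnorm_mx n (g : 'cV[C]_n) :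
  (g ^t* *m g) 0 0 = \sum_i `|g i 0| ^+ 2.
Proof. by rewrite !mxE; apply: eq_bigr => i _; rewrite !mxE normCKC. Qed.

Lemma trC_mul m n p (A : 'M[C]_(m, n)) (B : 'M[C]_(n, p)) :
  (A *m B) ^t* = B ^t* *m A ^t*.
Proof. by rewrite trmx_mul map_mxM. Qed.

Lemma spec_bound n (M P : 'M[C]_n) (D : 'rV[C]_n) (c lam : C) (v f : 'cV[C]_n) :
  P \is unitarymx -> M = invmx P *m diag_mx D *m P ->
  M *m v = c *: v -> v != 0 ->
  (forall k1 k2, D 0 k1 = c -> D 0 k2 = c -> k1 = k2) ->
  (forall k, D 0 k != c -> `|D 0 k| <= lam) ->
  (v ^t* *m f) 0 0 = 0 ->
  \sum_i `|(M *m f) i 0| ^+ 2 <= lam ^+ 2 * \sum_i `|f i 0| ^+ 2.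
Proof.
move=> Pu HM Hv v0 Huniq Hlam Hort.
have Pi : invmx P = P ^t* by rewrite invmx_unitary.
have PPt : P *m P ^t* = 1%:M by apply/unitarymxP.
have PtP : P ^t* *m P = 1%:M by rewrite -Pi mulVmx // unitarymx_unit.
have iso2 : forall g h : 'cV[C]_n, ((P *m g) ^t* *m (P *m h)) = g ^t* *m h.
  by move=> g h; rewrite trC_mul -mulmxA (mulmxA (P^t*)) PtP mul1mx.
have iso : forall g : 'cV[C]_n, ((P *m g) ^t* *m (P *m g)) = g ^t* *m g.
  by move=> g; rewrite iso2.
have iso' : forall g : 'cV[C]_n, ((P^t* *m g) ^t* *m (P^t* *m g)) = g ^t* *m g.
  move=> g; rewrite trC_mul -mulmxA (mulmxA _ (P^t*)).
  have -> : P ^t* ^t* = P by rewrite map_trmx trmxK -map_mx_comp; apply/matrixP=> i j; rewrite !mxE /= conjCK.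
  by rewrite PPt mul1mx.
set z := P *m f; set y := P *m v.
have Mf : M *m f = P^t* *m (diag_mx D *m z) by rewrite HM Pi !mulmxA.
have PM : P *m M = diag_mx D *m P by rewrite HM Pi !mulmxA PPt mul1mx.
have Dy : diag_mx D *m y = c *: y by rewrite /y mulmxA -PM -mulmxA Hv scalemxAr.
have y0 : forall k, D 0 k != c -> y k 0 = 0.
  move=> k Dk; have /matrixP/(_ k 0) := Dy; rewrite mul_diag_mx !mxE => /eqP.
  rewrite -subr_eq0 -mulrBl mulf_eq0 subr_eq0 (negbTE Dk) /=; exact/eqP.
have yn0 : y != 0.
  apply: contraNneq v0 => y00; have : P^t* *m y = v by rewrite /y mulmxA PtP mul1mx.
  by rewrite y00 mulmx0 => <-.
have [k0 yk0] : exists k0, y k0 0 != 0.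
  case: (pickP (fun k => y k 0 != 0)) => [k Hk|H]; first by exists k.
  move/negP: yn0; case; apply/eqP/matrixP => i j; rewrite ord1 [RHS]mxE.
  by have := H i => /= /negbFE/eqP.
have Dk0 : D 0 k0 = c by apply/eqP; apply: contraNT yk0 => /y0 ->; rewrite eqxx.
have zk0 : z k0 0 = 0.
  have : (y ^t* *m z) 0 0 = 0 by rewrite /y /z iso2.
  have E : forall k, (y ^t*) 0 k = (y k 0)^* by move=> k; rewrite mxE [trmx y 0 k]mxE.
  rewrite mxE (bigD1 k0) //= big1 ?addr0.
    by rewrite E => /eqP; rewrite mulf_eq0 conjC_eq0 (negbTE yk0) => /eqP.
  move=> k kk0; rewrite E.
  have -> : y k 0 = 0 by apply: y0; apply/eqP => Dk; move/eqP: kk0; apply; exact: Huniq Dk Dk0.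
  by rewrite conjC0 mul0r.
rewrite -(sqnorm_mx (M *m f)) Mf iso' sqnorm_mx -(sqnorm_mx f) -(iso f) sqnorm_mx.
rewrite mulr_sumr; apply: ler_sum => k _; rewrite mul_diag_mx mxE normrM exprMn.
have [Dk|Dk] := eqVneq (D 0 k) c.
  by rewrite (Huniq _ _ Dk Dk0) zk0 normr0 expr0n /= !mulr0.
apply: ler_wpM2r; first exact: exprn_ge0.
by rewrite lerXn2r ?nnegrE ?Hlam // (le_trans _ (Hlam _ Dk)).
Qed.
End S1.

Section NDL.
Variables (R : rcfType) (T : finType) (e : rel T).
Local Notation phi := (real_complex R).
Local Notation "M ^t*" := (map_mx conjC (trmx M)) (at level 30).

Lemma adjE (F : nzRingType) i j : adjmx F e i j = (e (enum_val i) (enum_val j))%:R.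
Proof. by rewrite mxE. Qed.

Lemma adj_sym (F : nzRingType) : simple_graph e -> (adjmx F e)^T = adjmx F e.
Proof. by move=> [sy _]; apply/matrixP => i j; rewrite !mxE sy. Qed.

Lemma adj_rowsum (F : nzRingType) d : regular e d -> forall i,
  \sum_j adjmx F e i j = d%:R.
Proof.
move=> reg i; under eq_bigr do rewrite adjE.
rewrite (sum_ind F (e (enum_val i))) -(reg (enum_val i)); congr (_%:R).
by apply: eq_card => x; rewrite !inE.
Qed.

Lemma normC_real (x : R) : `|(x%:C)%C| = (`|x|)%:C%C.
Proof. by rewrite normc_def /= expr0n /= addr0 sqrtr_sqr. Qed.

Lemma ndl_bound (d : nat) (lam : R) :
  ndl_graph e d lam -> lam < d%:R -> (0 < #|T|)%N ->
  forall fr : 'cV[R]_#|T|, \sum_i fr i 0 = 0 ->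
  \sum_i ((adjmx R e *m fr) i 0) ^+ 2 <= lam ^+ 2 * \sum_i (fr i 0) ^+ 2.
Proof.
move=> [sg reg lam0 [l [Hchar Hsort Hl]]] ltd n0 fr Hfr.
set A := adjmx R e.
pose Ac := map_mx phi A.
have AcE : Ac = adjmx R[i] e.
  by apply/matrixP => i j; rewrite !mxE rmorph_nat.
have Acsym : Ac ^t* = Ac.
  by rewrite AcE; apply/matrixP => i j; rewrite !mxE /= conjC_nat; case: sg => sy _; rewrite sy.
have Anorm : Ac \is normalmx by apply/normalmxP; rewrite Acsym.
have HAc := orthomx_spectralP Anorm.
set P := spectralmx Ac in HAc; set D := spectral_diag Ac in HAc.
have Pu : P \is unitarymx := spectral_unitarymx Ac.
pose c := phi d%:R.
have Hprod : \prod_(k < #|T|) ('X - (D 0 k)%:P) = \prod_(i < #|T|) ('X - (phi (l i))%:P).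
  rewrite -char_poly_diag -(char_poly_similar _ (unitarymx_unit Pu)) -HAc.
  rewrite /Ac -map_char_poly Hchar rmorph_prod; apply: eq_bigr => i _.
  by rewrite /= map_polyXsubC.
have colsum : forall k, \sum_i A i k = d%:R.
  move=> k; rewrite -(adj_rowsum R reg k); apply: eq_bigr => i _.
  by rewrite /A !adjE; case: sg => sy _; rewrite sy.
have Aev : eigenvalue A d%:R.
  apply/eigenvalueP; exists (const_mx 1).
    apply/rowP => k; rewrite !mxE mulr1 -(colsum k); apply: eq_bigr => i _.
    by rewrite !mxE mul1r.
  apply/eqP => /rowP /(_ (Ordinal n0)); rewrite !mxE; apply/eqP; exact: oner_neq0.
have ld0 : forall i : 'I_#|T|, l i = d%:R -> val i = 0%N.
  move=> i li; case: (posnP i) => // /Hl; rewrite li ger0_norm ?ler0n //.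
  by move=> /(lt_le_trans ltd); rewrite ltxx.
have [j Hj] : exists j, l j = d%:R.
  move: Aev; rewrite eigenvalue_root_char Hchar rootE horner_prod.
  move/prodf_eq0 => [j _]; rewrite hornerXsubC subr_eq0 => /eqP dj; by exists j.
have luniq : forall i, l i = d%:R -> i = j.
  by move=> i li; apply: val_inj; rewrite /= (ld0 _ li) (ld0 _ Hj).
have Dbound : forall k, D 0 k != c -> `|D 0 k| <= phi lam.
  move=> k Dk.
  have : root (\prod_(i < #|T|) ('X - (phi (l i))%:P)) (D 0 k).
    rewrite -Hprod rootE horner_prod; apply/prodf_eq0; exists k => //.
    by rewrite hornerXsubC subrr.
  rewrite rootE horner_prod => /prodf_eq0 [i _]; rewrite hornerXsubC subr_eq0 => /eqP Dki.
  have ij : i != j by apply: contraNneq Dk => ij; rewrite Dki ij Hj.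
  have : (0 < i)%N.
    rewrite lt0n; apply: contra ij => /eqP i0; apply/eqP/val_inj; rewrite /= i0 (ld0 _ Hj).
    done.
  by move=> /Hl li; rewrite Dki normC_real lecR.
have Duniq : forall k1 k2, D 0 k1 = c -> D 0 k2 = c -> k1 = k2.
  move=> k1 k2 D1 D2; apply/eqP; apply/negPn/negP => k12.
  have XC0 : 'X - c%:P != 0 by rewrite polyXsubC_eq0.
  rewrite (bigD1 k1) // (bigD1 k2) 1?eq_sym //= in Hprod.
  rewrite [X in _ = X](bigD1 j) //= D1 D2 Hj in Hprod; move: Hprod.
  move/(mulfI XC0) => /(congr1 (fun p => p.[c])).
  rewrite hornerM hornerXsubC subrr mul0r horner_prod => /esym/eqP.
  apply/negP/prodf_neq0 => i ij; rewrite hornerXsubC subr_eq0.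
  apply/eqP => /complexI li; by move/eqP: ij; apply; apply: luniq.
have v1 : Ac *m const_mx 1 = c *: (const_mx 1 : 'cV[R[i]]_#|T|).
  apply/matrixP => i k; rewrite !mxE mulr1.
  under eq_bigr do rewrite !mxE mulr1.
  by rewrite /c -rmorph_sum -(adj_rowsum R reg i); under [in RHS]eq_bigr do rewrite adjE.
have v0 : (const_mx 1 : 'cV[R[i]]_#|T|) != 0.
  apply/eqP => /matrixP /(_ (Ordinal n0) 0); rewrite !mxE; apply/eqP; exact: oner_neq0.
have ort : ((const_mx 1 : 'cV[R[i]]_#|T|) ^t* *m map_mx phi fr) 0 0 = 0.
  rewrite mxE; under eq_bigr do rewrite !mxE conjC1 mul1r.
  by rewrite -rmorph_sum Hfr rmorph0.
have := spec_bound Pu HAc v1 v0 Duniq Dbound ort.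
rewrite -map_mxM.
under eq_bigr do rewrite mxE normC_real -rmorphXn real_normK ?num_real //.
under [X in _ <= _ * X]eq_bigr do rewrite mxE normC_real -rmorphXn real_normK ?num_real //.
by rewrite -!rmorph_sum -rmorphXn -rmorphM lecR.
Qed.
End NDL.
From mathcomp Require Import lra.
Import Order.TTheory.
Lemma R2 (F : realFieldType) (d l om a : F) : 0 <= l -> 0 <= om ->
  (d + l) * om + l < a -> l ^+ 2 * om < (a - om * d) ^+ 2.
Proof.
move=> l0 om0 H.
have h1 : l * (1 + om) < a - om * d by lra.
have h2 : 0 <= l * (1 + om) by nra.
have h3 : (l * (1 + om)) ^+ 2 < (a - om * d) ^+ 2 by nra.
nra.
Qed.
Lemma R1 (F : realFieldType) (d l om : F) : 0 <= l -> 0 <= om ->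
  l < (d + l) * om -> (d + l) * om + l < d -> l ^+ 2 * om <= (om * d) ^+ 2.
Proof.
move=> l0 om0 H1 H2.
have d2 : 2 * l < d by lra.
have hd : 0 < d by lra.
have h : l ^+ 2 <= d ^+ 2 * om.
  have e1 : d ^+ 2 * l <= d ^+ 2 * ((d + l) * om).
    by rewrite ler_wpM2l ?sqr_ge0 // ltW.
  have q : 0 <= (d - 2 * l) * (d + l) + l ^+ 2.
    by rewrite addr_ge0 ?sqr_ge0 // mulr_ge0 // ?subr_ge0; lra.
  have e2 : l ^+ 2 * (d + l) <= d ^+ 2 * l.
    have := mulr_ge0 l0 q; rewrite -subr_ge0; nra.
  have e3 : l ^+ 2 * (d + l) <= (d ^+ 2 * om) * (d + l).
    by apply: (le_trans e2); apply: (le_trans e1); rewrite [X in _ <= X]mulrAC -mulrA.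
  by rewrite ler_pM2r in e3 => //; lra.
nra.
Qed.

Lemma cross (T : finType) (e : rel T) (S : {set T}) x y :
  connect e x y -> x \in S -> y \notin S ->
  exists2 u, u \in S & exists2 v, v \notin S & e u v.
Proof.
move/connectP => [p pth ->] {y}; elim: p x pth => [|z p IH] x /= pth xS yS.
  by rewrite xS in yS.
case/andP: pth => exz pth; case: (boolP (z \in S)) => zS.
  exact: IH pth zS yS.
by exists x => //; exists z.
Qed.

Lemma ind_sq (R : nzRingType) (b : bool) : ((b%:R : R) ^+ 2) = b%:R.
Proof. by case: b; rewrite ?expr1n ?expr0n. Qed.

Lemma sq_sum (F : comNzRingType) n (b : 'I_n -> bool) (om : F) :
  \sum_(i < n) ((b i)%:R - om) ^+ 2 =
  \sum_i (b i)%:R - (\sum_i (b i)%:R) * om *+ 2 + om ^+ 2 * n%:R.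
Proof.
under eq_bigr do rewrite sqrrB ind_sq.
by rewrite big_split sumrB /= sumrMnl -mulr_suml sumr_const card_ord mulr_natr.
Qed.

Theorem mainTheorem4 (R : rcfType) (T : finType) (e : rel T) (d : nat) (lam : R)
  (t : nat) (vs : 'I_t.-1 -> T) :
  ndl_graph e d lam -> connected_graph e -> (2 <= t)%N ->
  let B := \bigcup_(i < t.-1) cnbhd e (vs i) in
  let W := ~: B in
  lam / (d%:R + lam) * #|T|%:R < #|W|%:R ->
  exists2 u, u \in B &
    (1 <= #|nbhd e u :&: W|)%N /\
    #|nbhd e u :&: W|%:R <= (d%:R + lam) * (#|W|%:R / #|T|%:R) + lam.
Proof.
move=> ndl conn t2 B W Hw.
have ndl' := ndl; case: ndl' => sg reg lam0 _.
have t1 : (0 < t.-1)%N by case: t t2 vs {B W Hw} => [|[|t']].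
pose x0 := vs (Ordinal t1).
have x0B : x0 \in B by apply/bigcupP; exists (Ordinal t1) => //; rewrite /cnbhd setU11.
have n0 : (0 < #|T|)%N by apply/card_gt0P; exists x0.
have dl0 : 0 <= d%:R + lam by rewrite addr_ge0 ?ler0n.
have wpos : (0 < #|W|)%N.
  rewrite -(ltr0n R); apply: le_lt_trans Hw.
  by rewrite mulr_ge0 ?ler0n ?divr_ge0.
have [y yW] : exists y, y \in W by apply/card_gt0P.
have yB : y \notin B by rewrite inE in yW.
have [u0 u0B [v0 v0W ev]] := cross (conn x0 y) x0B yB.
have u0t : (1 <= #|nbhd e u0 :&: W|)%N.
  by apply/card_gt0P; exists v0; rewrite in_setI /nbhd inE ev /W in_setC.
set K := (d%:R + lam) * (#|W|%:R / #|T|%:R) + lam.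
have [dK|Kd] := leP (d%:R : R) K.
  exists u0 => //; split => //; apply: le_trans dK; rewrite ler_nat -(reg u0).
  by apply: subset_leq_card; apply: subsetIl.
case: (boolP [exists u, (u \in B) && ((0 < #|nbhd e u :&: W|)%N &&
    (#|nbhd e u :&: W|%:R <= K))]) => [/existsP [u /and3P [uB u1 uK]] | Hn].
  by exists u.
exfalso.
have Hbig : forall u, u \in B -> (0 < #|nbhd e u :&: W|)%N -> K < #|nbhd e u :&: W|%:R.
  move=> u uB u1; rewrite ltNge; apply: contra Hn => uK; apply/existsP; exists u.
  by rewrite uB u1 uK.
pose om : R := #|W|%:R / #|T|%:R.
have nR0 : (#|T|%:R : R) != 0 by rewrite pnatr_eq0 -lt0n.
have nRp : (0 : R) < #|T|%:R by rewrite ltr0n.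
have omn : om * #|T|%:R = #|W|%:R by rewrite /om mulfVK.
have om0 : 0 <= om by rewrite /om divr_ge0 ?ler0n.
have Klam : lam <= K by rewrite /K lerDr mulr_ge0.
have lamd : lam < d%:R by apply: le_lt_trans Kd.
have Dp : 0 < d%:R + lam by lra.
have Hw' : lam < (d%:R + lam) * om.
  move: Hw; rewrite mulrAC ltr_pdivrMr // => Hw.
  by rewrite /om mulrA ltr_pdivlMr // [X in _ < X]mulrC.
pose fr : 'cV[R]_#|T| := \col_i ((enum_val i \in W)%:R - om).
have sumind : \sum_(i < #|T|) ((enum_val i \in W)%:R : R) = #|W|%:R.
  have := sum_ind R (fun x => x \in W); rewrite /= => ->; congr (_%:R).
have Hfr0 : \sum_i fr i 0 = 0.
  under eq_bigr do rewrite mxE.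
  by rewrite sumrB sumind sumr_const card_ord -[om *+ _]mulr_natr omn subrr.
have Hnorm : \sum_i (fr i 0) ^+ 2 = #|W|%:R - om * #|W|%:R.
  under eq_bigr do rewrite mxE.
  have := sq_sum (fun i : 'I_#|T| => enum_val i \in W) om; rewrite /= => ->.
  rewrite sumind expr2 -mulrA omn; lra.
have Aentry : forall i, (adjmx R e *m fr) i 0 =
    #|nbhd e (enum_val i) :&: W|%:R - om * d%:R.
  move=> i; rewrite mxE; under eq_bigr do rewrite [fr _ _]mxE mulrBr.
  rewrite sumrB -mulr_suml (adj_rowsum R reg) [d%:R * om]mulrC; congr (_ - _).
  under eq_bigr do rewrite adjE -natrM mulnb.
  have := sum_ind R (fun x => e (enum_val i) x && (x \in W)); rewrite /= => ->.
  congr (_%:R).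
  by apply: eq_card => x; rewrite -topredE /= !inE.
have Hup := ndl_bound ndl lamd n0 Hfr0; rewrite Hnorm in Hup.
have term : forall i, lam ^+ 2 * om * (enum_val i \in B)%:R <= ((adjmx R e *m fr) i 0) ^+ 2.
  move=> i; rewrite Aentry; case: (boolP (enum_val i \in B)) => uB; last first.
    by rewrite mulr0 sqr_ge0.
  rewrite mulr1; case: (posnP #|nbhd e (enum_val i) :&: W|) => [->|tp].
    rewrite sub0r sqrrN; apply: R1 => //.
  by apply/ltW/R2 => //; apply: Hbig.
pose i0 := enum_rank u0.
have strict : lam ^+ 2 * om * (enum_val i0 \in B)%:R < ((adjmx R e *m fr) i0 0) ^+ 2.
  rewrite Aentry /i0 enum_rankK u0B mulr1; apply: R2 => //; exact: Hbig.
have Hlow : lam ^+ 2 * om * #|B|%:R < \sum_i ((adjmx R e *m fr) i 0) ^+ 2.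
  have := sum_ind R (fun x => x \in B); rewrite /= => <-; rewrite mulr_sumr.
  rewrite (bigD1 i0) //= [X in _ < X](bigD1 i0) //=.
  by apply: ltr_leD => //; apply: ler_sum => i _; apply: term.
have cB : (#|B|%:R : R) = #|T|%:R - #|W|%:R.
  by rewrite -(cardsC B) natrD addrK.
have E : om * (#|T|%:R - #|W|%:R) = #|W|%:R - om * #|W|%:R by rewrite mulrBr omn.
by move: (lt_le_trans Hlow Hup); rewrite cB -mulrA E ltxx.
Qed.
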